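(* Let $f=g+h$ where $g:\mathbb{R}^n\to\mathbb{R}$ is $C^1$-smooth with $L$-Lipschitz gradient and $h(x)=\lambda\|x\|_1$ for some $\lambda>0$. Let $S=\arg\min f$, let $\bar x\in S$, $I=\{i:\bar x_i=0\}$ and $\mathcal{M}=\{x:x_i=0\ \forall i\in I\}$, and fix $t>0$. If $0\in\operatorname{ri}\partial f(\bar x)$, then the following are equivalent: (i) there exist $\hat\epsilon,\hat\mu>0$ such that $\hat\mu\,\operatorname{dist}(x,S)\le\|x-\operatorname{prox}_{th}(x-t\nabla g(x))\|$ for all $x\in B_{\hat\epsilon}(\bar x)$; (ii) there exist $\epsilon,\mu>0$ such that $\mu\,\operatorname{dist}(x,S\cap\mathcal{M})\le\|\nabla_{\mathcal{M}}f(x)\|$ for all $x\in B_\epsilon(\bar x)\cap\mathcal{M}$.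
   Context: $\partial f(x)=\nabla g(x)+\lambda\partial\|\cdot\|_1(x)$; $\operatorname{ri}$ is the relative interior; $\operatorname{prox}_{th}(z)=\arg\min_y\{h(y)+\frac1{2t}\|y-z\|^2\}$. $\nabla_{\mathcal M}f(x)$ is the Riemannian gradient of the restriction $f|_{\mathcal M}$ (which is smooth near $\bar x$) with respect to the Euclidean metric on the subspace $\mathcal M$, i.e. the orthogonal projection onto $\mathcal M$ of the gradient of any local smooth extension of $f|_{\mathcal M}$. *)

(* Defs.v *)
From HB Require Import structures.
From mathcomp Require Import all_boot all_order all_algebra.
From mathcomp Require Import boolp classical_sets reals.
Set Implicit Arguments. Unset Strict Implicit. Unset Printing Implicit Defensive.
Import Order.TTheory GRing.Theory Num.Theory.
Local Open Scope ring_scope.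
Local Open Scope classical_set_scope.

Section Defs.
Variables (R : realType) (n : nat).
Local Notation vec := 'rV[R]_n.

Definition inner (x y : vec) : R := \sum_(i < n) x 0 i * y 0 i.
Definition norm2 (x : vec) : R := Num.sqrt (\sum_(i < n) x 0 i ^+ 2).
Definition norm1 (x : vec) : R := \sum_(i < n) `|x 0 i|.

Definition dist (x : vec) (A : set vec) : R := inf [set norm2 (x - a) | a in A].

Definition is_gradient (g : vec -> R) (dg : vec -> vec) : Prop :=
  forall x eps, 0 < eps -> exists2 delta, 0 < delta &
    forall d, norm2 d < delta ->
      `|g (x + d) - g x - inner (dg x) d| <= eps * norm2 d.

Definition lipschitz_grad (dg : vec -> vec) (L : R) : Prop :=
  forall x y, norm2 (dg x - dg y) <= L * norm2 (x - y).

Definition argmin (f : vec -> R) : set vec := [set x | forall y, f x <= f y].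

(* prox_{t h}(z) = argmin_y { h y + 1/(2t) ||y - z||^2 } (a singleton for the
   functions considered; xget picks its element) *)
Definition prox (t : R) (h : vec -> R) (z : vec) : vec :=
  xget 0 (argmin (fun y => h y + (2 * t)^-1 * norm2 (y - z) ^+ 2)).

Definition subdiff_l1 (x : vec) : set vec :=
  [set v | forall y, norm1 x + inner v (y - x) <= norm1 y].
Definition subdiff_f (dg : vec -> vec) (lam : R) (x : vec) : set vec :=
  [set dg x + lam *: v | v in subdiff_l1 x].

Definition aff_hull (C : set vec) : set vec :=
  [set y | exists k (p : 'I_k -> vec) (w : 'I_k -> R),
     [/\ forall j, C (p j), \sum_(j < k) w j = 1 & y = \sum_(j < k) w j *: p j]].
Definition ri (C : set vec) : set vec :=
  [set x | C x /\ exists2 e, 0 < e &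
     forall y, aff_hull C y -> norm2 (y - x) < e -> C y].

Definition manifoldM (xbar : vec) : set vec :=
  [set x | forall i, xbar 0 i = 0 -> x 0 i = 0].

(* v is the Riemannian gradient at x of the restriction of f to the
   linear subspace M (Euclidean metric): v in M and
   f(x + d) = f x + <v, d> + o(||d||) for d in M *)
Definition is_riem_grad (M : set vec) (f : vec -> R) (x v : vec) : Prop :=
  M v /\ forall eps, 0 < eps -> exists2 delta, 0 < delta &
    forall d, M d -> norm2 d < delta ->
      `|f (x + d) - f x - inner v d| <= eps * norm2 d.
Definition riem_grad (M : set vec) (f : vec -> R) (x : vec) : vec :=
  xget 0 [set v | is_riem_grad M f x v].
End Defs.

(* Main.v *)
Require Import Defs.
From HB Require Import structures.
From mathcomp Require Import all_boot all_order all_algebra.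
From mathcomp Require Import boolp classical_sets reals.
From mathcomp Require Import ring lra.
Import Order.TTheory GRing.Theory Num.Theory.
Local Open Scope ring_scope.
Local Open Scope classical_set_scope.

Module Aux.
Set Implicit Arguments. Unset Strict Implicit. Unset Printing Implicit Defensive.
Local Notation sg := Num.sg.

Section Norms.
Variables (R : realType) (n : nat).
Local Notation vec := 'rV[R]_n.
Local Notation norm2 := (@norm2 R n).

Lemma sumsq_ge0 (x : vec) : 0 <= \sum_(i < n) x 0 i ^+ 2.
Proof. by apply: sumr_ge0 => i _; rewrite sqr_ge0. Qed.

Lemma norm2_ge0 (x : vec) : 0 <= norm2 x.
Proof. exact: sqrtr_ge0. Qed.

Lemma norm2_sq (x : vec) : norm2 x ^+ 2 = \sum_(i < n) x 0 i ^+ 2.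
Proof. by rewrite /Defs.norm2 sqr_sqrtr // sumsq_ge0. Qed.

Lemma norm2_le (a b : vec) : (forall k, `|a 0 k| <= `|b 0 k|) -> norm2 a <= norm2 b.
Proof.
move=> H; rewrite /Defs.norm2 ler_sqrt ?sumsq_ge0 //; apply: ler_sum => k _.
by rewrite -(real_normK (num_real (a 0 k))) -(real_normK (num_real (b 0 k))) lerXn2r ?nnegrE.
Qed.

Lemma coord_le (x : vec) k : `|x 0 k| <= norm2 x.
Proof.
rewrite /Defs.norm2 -sqrtr_sqr ler_sqrt ?sumsq_ge0 // (bigD1 k) //= lerDl.
by apply: sumr_ge0 => i _; rewrite sqr_ge0.
Qed.

Lemma norm2Z c (x : vec) : norm2 (c *: x) = `|c| * norm2 x.
Proof.
rewrite /Defs.norm2 -sqrtr_sqr -sqrtrM ?sqr_ge0 // mulr_sumr; congr Num.sqrt.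
by apply: eq_bigr => i _; rewrite mxE exprMn.
Qed.

Lemma norm2N (x : vec) : norm2 (- x) = norm2 x.
Proof. by rewrite -scaleN1r norm2Z normrN1 mul1r. Qed.

Lemma norm2B (x y : vec) : norm2 (x - y) = norm2 (y - x).
Proof. by rewrite -norm2N opprB. Qed.

Lemma norm2_eq0 (x : vec) : norm2 x = 0 -> x = 0.
Proof.
move=> H; have : \sum_(i < n) x 0 i ^+ 2 = 0 by rewrite -norm2_sq H expr0n.
move/eqP; rewrite psumr_eq0 => [|i _]; last by rewrite sqr_ge0.
move/allP => A; apply/rowP => k; rewrite mxE.
by have /implyP/(_ isT) := A k (mem_index_enum k); rewrite sqrf_eq0 => /eqP.
Qed.

Lemma innerE (a b : vec) : inner a b = \sum_(i < n) a 0 i * b 0 i.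
Proof. by []. Qed.

Lemma cauchy_schwarz (a b : vec) : inner a b <= norm2 a * norm2 b.
Proof.
set A := norm2 a; set B := norm2 b.
have A0 : 0 <= A by apply: norm2_ge0.
have B0 : 0 <= B by apply: norm2_ge0.
have key : 0 <= \sum_(i < n) (B * a 0 i - A * b 0 i) ^+ 2.
  by apply: sumr_ge0 => i _; rewrite sqr_ge0.
have E : \sum_(i < n) (B * a 0 i - A * b 0 i) ^+ 2 =
   B^+2 * (\sum_(i < n) a 0 i ^+ 2) - 2 * A * B * (\sum_(i < n) a 0 i * b 0 i)
    + A^+2 * (\sum_(i < n) b 0 i ^+ 2).
  rewrite !mulr_sumr -sumrB -big_split /=.
  by apply: eq_bigr => i _; ring.
rewrite E -!norm2_sq -/A -/B -/(inner a b) in key.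
have [AB0|ABp] := eqVneq (A * B) 0.
  move: AB0 => /eqP; rewrite mulf_eq0 => /orP[] /eqP H.
  - by rewrite /inner (norm2_eq0 H) H mul0r big1 // => i _; rewrite mxE mul0r.
  - by rewrite /inner (norm2_eq0 H) H mulr0 big1 // => i _; rewrite mxE mulr0.
have ABpos : 0 < A * B by rewrite lt_def ABp mulr_ge0.
have : 2 * (A * B) * inner a b <= 2 * (A * B) * (A * B).
  nra.
by rewrite ler_pM2l // mulr_gt0.
Qed.

Lemma norm2D (a b : vec) : norm2 (a + b) <= norm2 a + norm2 b.
Proof.
rewrite -(ler_pXn2r (n:=2)) ?nnegrE ?addr_ge0 ?norm2_ge0 //.
have E : norm2 (a + b) ^+ 2 = norm2 a ^+ 2 + 2 * inner a b + norm2 b ^+ 2.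
  rewrite !norm2_sq /inner mulr_sumr -!big_split /=.
  by apply: eq_bigr => i _; rewrite mxE; ring.
rewrite E; have := cauchy_schwarz a b; nra.
Qed.

Lemma norm2_tri (x y z : vec) : norm2 (x - z) <= norm2 (x - y) + norm2 (y - z).
Proof. by have := norm2D (x - y) (y - z); rewrite addrA subrK. Qed.

End Norms.


Section More.
Variables (R : realType) (n : nat).
Local Notation vec := 'rV[R]_n.
Local Notation norm2 := (@norm2 R n).

Lemma dist_le (x : vec) (A : set vec) a : A a -> dist x A <= norm2 (x - a).
Proof.
move=> Aa; have : has_lbound [set norm2 (x - a) | a in A].
  by exists 0 => _ [b _ <-]; apply: norm2_ge0.
by move/ge_inf; apply; exists a.
Qed.

Lemma dist_ge (x : vec) (A : set vec) a0 c : A a0 ->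
  (forall a, A a -> c <= norm2 (x - a)) -> c <= dist x A.
Proof.
move=> Aa0 H; apply: lb_le_inf; first by exists (norm2 (x - a0)), a0.
by move=> _ [b Ab <-]; apply: H.
Qed.

Lemma pos_lb (q : 'I_n -> R) : (forall k, 0 < q k) -> exists2 c, 0 < c & forall k, c <= q k.
Proof.
move=> qp; have S0 : 0 <= \sum_(k < n) (q k)^-1.
  by apply: sumr_ge0 => k _; rewrite invr_ge0 ltW.
have P : 0 < 1 + \sum_(k < n) (q k)^-1 by rewrite ltr_pwDl.
exists (1 + \sum_(k < n) (q k)^-1)^-1; first by rewrite invr_gt0.
move=> k; rewrite -lef_pV2 ?posrE ?invr_gt0 // invrK.
rewrite (bigD1 k) //=.
have : 0 <= \sum_(i < n | i != k) (q i)^-1.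
  by apply: sumr_ge0 => j _; rewrite invr_ge0 ltW.
lra.
Qed.

Definition ev (k : 'I_n) : vec := delta_mx 0 k.

Lemma evE k j : ev k 0 j = (k == j)%:R.
Proof. by rewrite /ev mxE eqxx eq_sym. Qed.

Lemma inner_ev (v : vec) k : inner v (ev k) = v 0 k.
Proof.
rewrite /inner (bigD1 k) //= evE eqxx mulr1 big1 ?addr0 // => j jk.
by rewrite evE eq_sym (negbTE jk) mulr0.
Qed.

Lemma innerZr (v w : vec) s : inner v (s *: w) = s * inner v w.
Proof. by rewrite /inner mulr_sumr; apply: eq_bigr => i _; rewrite mxE; ring. Qed.

Lemma norm2_ev k : norm2 (ev k) = 1.
Proof.
rewrite /Defs.norm2 (bigD1 k) //= /ev mxE !eqxx big1 ?addr0 ?expr1n ?sqrtr1 // => j jk.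
by rewrite mxE eqxx (negbTE jk) expr0n.
Qed.

Lemma norm1_ev (x : vec) k s :
  norm1 (x + s *: ev k) = norm1 x - `|x 0 k| + `|x 0 k + s|.
Proof.
rewrite /norm1 (bigD1 k) //= [in RHS](bigD1 k) //= !mxE !eqxx mulr1.
rewrite (addrC `|x 0 k|) addrK [RHS]addrC; congr (_ + _); apply: eq_bigr => j jk.
by rewrite !mxE eqxx (negbTE jk) mulr0 addr0.
Qed.

Lemma subdiff_l1P (x v : vec) : subdiff_l1 x v <->
  (forall k, `|v 0 k| <= 1 /\ v 0 k * x 0 k = `|x 0 k|).
Proof.
split.
  move=> H k; have T : forall s, `|x 0 k| + s * v 0 k <= `|x 0 k + s|.
    move=> s; have := H (x + s *: ev k).
    rewrite addrAC subrr add0r innerZr inner_ev norm1_ev; lra.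
  have T1 := T 1; have T2 := T (-1); have T3 := T (- x 0 k).
  have N1 := ler_normD (x 0 k) 1; have N2 := ler_normD (x 0 k) (-1).
  rewrite normr1 in N1; rewrite normrN normr1 in N2.
  rewrite subrr normr0 in T3.
  have A1 : `|v 0 k| <= 1 by rewrite ler_norml; apply/andP; split; lra.
  split => //; apply/eqP; rewrite eq_le; apply/andP; split; last by rewrite mulrC; lra.
  rewrite -[X in X <= _]ger0_norm; last by have := normr_ge0 (x 0 k); rewrite mulrC; lra.
  by rewrite normrM ler_piMl.
move=> H y; rewrite /norm1 /inner -big_split /=.
apply: ler_sum => k _; rewrite !mxE; case: (H k) => H1 H2.
have : v 0 k * y 0 k <= `|y 0 k|.
  by apply: le_trans (ler_norm _) _; rewrite normrM ler_piMl.
lra.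
Qed.

End More.


Section Prox.
Variables (R : realType) (n : nat).
Local Notation vec := 'rV[R]_n.
Local Notation norm2 := (@norm2 R n).

Lemma prox_char t lam (z p : vec) : 0 < t -> 0 < lam ->
  (forall k, exists s, [/\ `|s| <= 1, s * p 0 k = `|p 0 k| & z 0 k - p 0 k = t * lam * s]) ->
  prox t (fun x => lam * norm1 x) z = p.
Proof.
move=> t0 l0 H.
pose phi := fun y : vec => lam * norm1 y + (2 * t)^-1 * norm2 (y - z) ^+ 2.
have c0 : 0 < (2 * t)^-1 by rewrite invr_gt0 mulr_gt0.
have key : forall y, phi p + (2 * t)^-1 * norm2 (y - p) ^+ 2 <= phi y.
  move=> y; rewrite /phi /norm1 !norm2_sq !mulr_sumr -!big_split /=.
  apply: ler_sum => k _; rewrite !mxE.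
  have [s [s1 s2 s3]] := H k.
  have sy : s * y 0 k <= `|y 0 k|.
    by apply: le_trans (ler_norm _) _; rewrite normrM ler_piMl.
  set c := (2 * t)^-1.
  have ct : c * (2 * t) = 1 by rewrite mulVf // mulf_neq0 // gt_eqF.
  have zk : z 0 k = p 0 k + t * lam * s by lra.
  rewrite zk.
  have E : lam * `|y 0 k| + c * (y 0 k - (p 0 k + t * lam * s)) ^+ 2
     - (lam * `|p 0 k| + c * (p 0 k - (p 0 k + t * lam * s)) ^+ 2 + c * (y 0 k - p 0 k) ^+ 2)
     = lam * `|y 0 k| - lam * `|p 0 k| - (c * (2 * t)) * lam * s * (y 0 k - p 0 k) by ring.
  rewrite ct mul1r in E.
  have h1 : lam * (s * p 0 k) = lam * `|p 0 k| by rewrite s2.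
  have h2 : 0 <= lam * (`|y 0 k| - s * y 0 k) by rewrite mulr_ge0 ?subr_ge0 // ltW.
  have E2 : lam * `|y 0 k| - lam * `|p 0 k| - lam * s * (y 0 k - p 0 k) =
     lam * (`|y 0 k| - s * y 0 k) + (lam * (s * p 0 k) - lam * `|p 0 k|) by ring.
  rewrite E2 h1 subrr addr0 in E.
  rewrite -subr_ge0 E //.
rewrite /prox; apply: xget_unique.
  move=> y; apply: le_trans (key y); rewrite /phi lerDl.
  by rewrite mulr_ge0 ?exprn_ge0 ?norm2_ge0 // ltW.
move=> y Hy; have := Hy p; have := key y; rewrite -/(phi y) -/(phi p) => K1 K2.
have : (2 * t)^-1 * norm2 (y - p) ^+ 2 <= 0 by lra.
rewrite pmulr_rle0 // => N; apply/eqP; rewrite -subr_eq0; apply/eqP; apply: norm2_eq0.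
apply/eqP; rewrite -sqrf_eq0 eq_le N /=; apply: exprn_ge0; apply: norm2_ge0.
Qed.

End Prox.


Lemma sg_sq (R : realDomainType) (a : R) : a != 0 -> sg a * sg a = 1.
Proof. by move=> a0; rewrite -expr2 sqr_sg a0. Qed.

Section SC.
Variables (R : realType) (n : nat).
Local Notation vec := 'rV[R]_n.
Local Notation norm2 := (@norm2 R n).
Variables (dg : vec -> vec) (lam : R) (xbar : vec).
Hypothesis l0 : 0 < lam.
Local Notation ev := (@ev R n).
Hypothesis Hri : ri (subdiff_f dg lam xbar) 0.

Lemma coordE (a b : vec) k : a = b -> a 0 k = b 0 k.
Proof. by move=> ->. Qed.

Lemma SC_a k : xbar 0 k != 0 -> dg xbar 0 k = - lam * sg (xbar 0 k).
Proof.
move=> xk; case: Hri => [[v0 /subdiff_l1P Hv0 E0] _].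
have := coordE k E0; rewrite !mxE => E.
have [_ H2] := Hv0 k.
have : (v0 0 k - sg (xbar 0 k)) * xbar 0 k = 0 by rewrite mulrBl H2 -normrEsg subrr.
move/eqP; rewrite mulf_eq0 (negbTE xk) orbF subr_eq0 => /eqP V.
rewrite V in E; lra.
Qed.

Lemma SC_b k : xbar 0 k = 0 -> `|dg xbar 0 k| < lam.
Proof.
move=> xk; case: Hri => [[v0 /subdiff_l1P Hv0 E0] [e e0 He]].
have := coordE k E0; rewrite !mxE => E.
have [H1 _] := Hv0 k.
have dgk : dg xbar 0 k = - lam * v0 0 k by lra.
rewrite dgk normrM normrN (gtr0_norm l0) gtr_pMr //.
rewrite lt_def H1 andbT; apply/negP => /eqP V1.
pose s := e / (2 * lam).
have s0 : 0 < s by rewrite divr_gt0 // mulr_gt0.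
pose v1 := v0 - (2 * v0 0 k) *: ev k.
have Hv1 : subdiff_l1 xbar v1.
  apply/subdiff_l1P => j; rewrite !mxE.
  have [<-|jk] := eqVneq k j.
    rewrite eqxx /= mulr1 xk mulr0 normr0; split => //.
    by rewrite (_ : v0 0 k - 2 * v0 0 k = - v0 0 k) ?normrN //; ring.
  rewrite andbF mulr0 subr0; exact: Hv0.
pose y : vec := (lam * s * v0 0 k) *: ev k.
have Ay : aff_hull (subdiff_f dg lam xbar) y.
  exists 2%N, (fun j : 'I_2 => if val j == 0%N then dg xbar + lam *: v1 else dg xbar + lam *: v0),
    (fun j : 'I_2 => if val j == 0%N then - s / 2 else 1 + s / 2).
  split.
  - move=> j; rewrite /subdiff_f /image /=; case: ifP => _; [exists v1|exists v0] => //; exact/subdiff_l1P.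
  - by rewrite !big_ord_recl big_ord0 /=; ring.
  - rewrite !big_ord_recl big_ord0 /= addr0 E0 scaler0 addr0 /v1 /y.
    apply/rowP => j; rewrite !mxE.
    have [<-|jk] := eqVneq k j.
      rewrite !eqxx /= !mulr1.
      rewrite [RHS](_ : _ = (- s / 2) * (dg xbar 0 k + lam * v0 0 k) + s * lam * v0 0 k); last by field.
      by rewrite E mulr0 add0r; ring.
    rewrite andbF !mulr0 subr0.
    by have := coordE j E0; rewrite !mxE => ->; rewrite mulr0.
have ny : norm2 (y - 0) < e.
  rewrite subr0 norm2Z norm2_ev mulr1 !normrM -V1 mulr1 (gtr0_norm l0) -normrM (gtr0_norm s0).
  rewrite /s (_ : lam * (e / (2 * lam)) = e / 2); last by field; rewrite gt_eqF.
  lra.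
have [w /subdiff_l1P Hw Ew] := He y Ay ny.
have := coordE k Ew; rewrite !mxE !eqxx /= mulr1 => Ek.
have [Hw1 _] := Hw k.
have : lam * (w 0 k - (1 + s) * v0 0 k) = 0 by rewrite dgk in Ek; lra.
move/eqP; rewrite mulf_eq0 gt_eqF //= subr_eq0 => /eqP Wk.
rewrite Wk normrM -V1 mulr1 gtr0_norm in Hw1; last lra.
lra.
Qed.

End SC.


Lemma abs_tri (R : realDomainType) (a b : R) : `|a| <= `|b| + `|a - b|.
Proof. have := ler_normD (a - b) b; rewrite subrK => H; lra. Qed.

Lemma abs_sg (R : realDomainType) (s a : R) : `|s| = 1 -> 0 <= s * a -> `|a| = s * a.
Proof. by move=> s1 p; rewrite -[`|a|]mul1r -s1 -normrM ger0_norm. Qed.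

Lemma sg_ge (R : realDomainType) (s a : R) : `|s| = 1 -> - `|a| <= s * a.
Proof.
move=> s1; have := ler_norm (- (s * a)); rewrite normrN normrM s1 mul1r; lra.
Qed.

Lemma sg_le (R : realDomainType) (s a : R) : `|s| = 1 -> s * a <= `|a|.
Proof. by move=> s1; have := ler_norm (s * a); rewrite normrM s1 mul1r. Qed.

Lemma norm_sg (R : realDomainType) (a : R) : a != 0 -> `|sg a| = 1.
Proof. by move=> a0; rewrite normr_sg a0. Qed.

Section Main.
Variables (R : realType) (n : nat).
Local Notation vec := 'rV[R]_n.
Local Notation norm2 := (@norm2 R n).
Local Notation ev := (@ev R n).
Variables (g : vec -> R) (dg : vec -> vec) (L lam t : R) (xbar : vec).
Hypotheses (Hg : is_gradient g dg) (L0 : 0 < L) (HL : lipschitz_grad dg L)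
  (l0 : 0 < lam) (t0 : 0 < t) (Hri : ri (subdiff_f dg lam xbar) 0).
Local Notation f := (fun x => g x + lam * norm1 x).
Local Notation M := (manifoldM xbar).

Variables (c : R) (c0 : 0 < c).
Hypothesis cq : forall k, c <= if xbar 0 k == 0 then lam - `|dg xbar 0 k| else `|xbar 0 k|.

Local Ltac hyps := have ? := t0; have ? := l0; have ? := L0; have ? := c0.

Definition rho := t * c / ((1 + t) * (1 + t * L)).

Lemma rho0 : 0 < rho.
Proof. by rewrite /rho divr_gt0 ?mulr_gt0 // addr_gt0 // mulr_gt0. Qed.

Lemma rho1 : rho * (1 + t * L) = t * c / (1 + t).
Proof.
rewrite /rho; field.
hyps. have h1 : 0 < 1 + t by lra.
have h2 : 0 < 1 + t * L by have := mulr_gt0 t0 L0; lra.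
by rewrite !gt_eqF.
Qed.

Lemma rho_tc : rho * (1 + t * L) < t * c.
Proof. hyps. rewrite rho1 ltr_pdivrMr; [|lra]. have := mulr_gt0 t0 c0; nra. Qed.

Lemma rho_c : rho * (1 + t * L) < c.
Proof. hyps. rewrite rho1 ltr_pdivrMr; [|lra]. nra. Qed.

Lemma rho_lt_c : rho < c.
Proof. hyps. have := rho_c; have := mulr_ge0 (ltW rho0) (ltW (mulr_gt0 t0 L0)); lra. Qed.

Lemma Lrho_c : L * rho < c.
Proof. hyps. have := rho_tc; have := rho0; nra. Qed.

Lemma coord_dist (x : vec) k : `|x 0 k - xbar 0 k| <= norm2 (x - xbar).
Proof. by have := coord_le (x - xbar) k; rewrite !mxE. Qed.

Lemma dg_coord (x y : vec) k : `|dg x 0 k - dg y 0 k| <= L * norm2 (x - y).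
Proof. by have := coord_le (dg x - dg y) k; rewrite !mxE => H; apply: le_trans H (HL x y). Qed.

Definition G (x : vec) : vec :=
  \row_k (if xbar 0 k == 0 then 0 else dg x 0 k + lam * sg (xbar 0 k)).
Definition xI (x : vec) : vec := \row_k (if xbar 0 k == 0 then x 0 k else 0).

Lemma residual x : norm2 (x - xbar) < rho ->
  x - prox t (fun x => lam * norm1 x) (x - t *: dg x) = xI x + t *: G x.
Proof.
move=> nx; hyps; set p := x - (xI x + t *: G x).
suff -> : prox t (fun x => lam * norm1 x) (x - t *: dg x) = p by rewrite /p subKr.
apply: prox_char => // k; rewrite /p !mxE.
have hx := coord_dist x k.
have hd := dg_coord x xbar k.
have hLr : L * norm2 (x - xbar) <= L * rho by rewrite ler_wpM2l ?ltW.
have := cq k; have := rho_tc; have := rho_c; have := rho0.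
case: (eqVneq (xbar 0 k) 0) => xk; rewrite ?xk ?eqxx ?(negbTE xk) => r0 rc rtc cqk.
  exists ((x 0 k - t * dg x 0 k) / (t * lam)); split.
  - rewrite normrM normfV (gtr0_norm (mulr_gt0 t0 l0)) ler_pdivrMr ?mulr_gt0 // mul1r.
    have T1 := ler_normB (x 0 k) (t * dg x 0 k).
    have T2 := abs_tri (dg x 0 k) (dg xbar 0 k).
    rewrite normrM (gtr0_norm t0) in T1.
    rewrite xk subr0 in hx.
    have : t * `|dg x 0 k| <= t * (`|dg xbar 0 k| + `|dg x 0 k - dg xbar 0 k|).
      by apply: ler_wpM2l; [exact: ltW | exact: T2].
    have : t * `|dg x 0 k - dg xbar 0 k| <= t * (L * rho).
      by apply: ler_wpM2l; [exact: ltW | exact: le_trans hd hLr].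
    have : t * `|dg xbar 0 k| <= t * (lam - c) by apply: ler_wpM2l; [exact: ltW | lra].
    nra.
  - by rewrite mulr0 addr0 subrr mulr0 normr0.
  - by rewrite mulr0 addr0 subrr subr0; field; rewrite !gt_eqF.
set s := sg (xbar 0 k).
have s1 : `|s| = 1 by apply: norm_sg.
have sx : s * xbar 0 k = `|xbar 0 k| by rewrite /s -normrEsg.
have sdg : s * dg xbar 0 k = - lam.
  by rewrite (SC_a Hri) // /s mulrCA (sg_sq xk) mulr1.
exists s; split; [by rewrite s1 | | by rewrite add0r; ring].
apply/esym; apply: abs_sg => //.
have A1 := sg_ge (x 0 k - xbar 0 k) s1.
have A2 := sg_le (dg x 0 k - dg xbar 0 k) s1.
have A3 : `|dg x 0 k - dg xbar 0 k| <= L * rho by apply: le_trans hd hLr.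
have A4 : t * (s * (dg x 0 k - dg xbar 0 k)) <= t * (L * rho).
  by apply: ler_wpM2l; [exact: ltW | exact: le_trans A2 A3].
rewrite add0r.
have E1 : t * lam * (s * s) = t * lam by rewrite (sg_sq xk) mulr1.
have E2 : t * (s * dg xbar 0 k) = - (t * lam) by rewrite sdg; ring.
lra.
Qed.


Lemma xI_le x : norm2 (xI x) <= norm2 (xI x + t *: G x).
Proof.
apply: norm2_le => k; rewrite !mxE.
by case: (eqVneq (xbar 0 k) 0) => xk; rewrite ?xk ?eqxx ?(negbTE xk) ?mulr0 ?addr0 ?normr0.
Qed.

Lemma G_le x : t * norm2 (G x) <= norm2 (xI x + t *: G x).
Proof.
rewrite -(gtr0_norm t0) -norm2Z; apply: norm2_le => k; rewrite !mxE.
by case: (eqVneq (xbar 0 k) 0) => xk; rewrite ?mulr0 ?normr0 ?normr_ge0 // add0r (gtr0_norm t0).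
Qed.

Lemma innerBl (v w d : vec) : inner (v - w) d = inner v d - inner w d.
Proof. by rewrite /inner -sumrB; apply: eq_bigr => i _; rewrite !mxE; ring. Qed.

Lemma inner_sq (u : vec) : inner u u = norm2 u ^+ 2.
Proof. by rewrite norm2_sq /inner; apply: eq_bigr => i _; rewrite expr2. Qed.

Lemma riem_unique (F : vec -> R) x v w :
  is_riem_grad M F x v -> is_riem_grad M F x w -> v = w.
Proof.
move=> [Mv Hv] [Mw Hw]; apply/eqP; rewrite -subr_eq0; apply/negPn/negP => uz.
set u := v - w.
have nu : 0 < norm2 u.
  rewrite lt_def norm2_ge0 andbT; apply/negP => /eqP /norm2_eq0 /eqP; exact/negP.
have e4 : 0 < norm2 u / 4 by rewrite divr_gt0.
have [d1 d10 H1] := Hv _ e4.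
have [d2 d20 H2] := Hw _ e4.
set m := Num.min d1 d2.
have m0 : 0 < m by rewrite lt_min d10 d20.
have m1 : m <= d1 by rewrite ge_min lexx.
have m2 : m <= d2 by rewrite ge_min lexx orbT.
set tau := m / (2 * norm2 u).
have tau0 : 0 < tau by rewrite divr_gt0 // mulr_gt0.
set d := tau *: u.
have Md : M d by move=> i xi; rewrite !mxE (Mv i xi) (Mw i xi) subrr mulr0.
have nd : norm2 d = m / 2.
  by rewrite norm2Z gtr0_norm // /tau; field; rewrite gt_eqF.
have A := H1 d Md ltac:(rewrite nd; lra).
have B := H2 d Md ltac:(rewrite nd; lra).
have I : inner v d - inner w d = tau * norm2 u ^+ 2 by rewrite -innerBl innerZr inner_sq.
have A' := ler_norm (- (F (x + d) - F x - inner v d)); rewrite normrN in A'.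
have B' := ler_norm (F (x + d) - F x - inner w d).
have NN : norm2 d = tau * norm2 u by rewrite norm2Z gtr0_norm.
rewrite NN in A B.
have P : 0 < tau * norm2 u ^+ 2 by rewrite mulr_gt0 // exprn_gt0.
have : tau * norm2 u ^+ 2 <= norm2 u / 4 * (tau * norm2 u) + norm2 u / 4 * (tau * norm2 u) by lra.
rewrite (_ : norm2 u / 4 * (tau * norm2 u) + norm2 u / 4 * (tau * norm2 u) = (tau * norm2 u ^+ 2) / 2); last by field.
lra.
Qed.


Lemma is_riem_G x : M x -> norm2 (x - xbar) < rho -> is_riem_grad M f x (G x).
Proof.
move=> Mx nx; hyps; split.
  by move=> i xi; rewrite !mxE xi eqxx.
move=> eps e0; have [d0 d00 Hd] := Hg x e0.
have rc := rho_lt_c.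
exists (Num.min d0 (c - rho)); first by rewrite lt_min d00 subr_gt0.
move=> d Md; rewrite lt_min => /andP[nd0 ndc].
have key : lam * norm1 (x + d) - lam * norm1 x + inner (dg x) d - inner (G x) d = 0.
  rewrite /norm1 /inner !mulr_sumr -!sumrB -big_split /= -sumrB.
  apply: big1 => k _; rewrite !mxE.
  case: (eqVneq (xbar 0 k) 0) => xk.
    by rewrite (Mx k xk) (Md k xk) addr0 normr0; ring.
  idtac.
  set s := sg (xbar 0 k).
  have s1 : `|s| = 1 by apply: norm_sg.
  have sx : s * xbar 0 k = `|xbar 0 k| by rewrite /s -normrEsg.
  have hx := coord_dist x k.
  have hdk := coord_le d k.
  have cqk := cq k; rewrite (negbTE xk) in cqk.
  have A1 := sg_ge (x 0 k - xbar 0 k) s1.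
  have A2 := sg_ge (d 0 k) s1.
  have P1 : 0 <= s * x 0 k by lra.
  have P2 : 0 <= s * (x 0 k + d 0 k) by lra.
  rewrite (abs_sg s1 P1) (abs_sg s1 P2); ring.
rewrite /=.
rewrite (_ : g (x + d) + lam * norm1 (x + d) - (g x + lam * norm1 x) - inner (G x) d =
  (g (x + d) - g x - inner (dg x) d) +
  (lam * norm1 (x + d) - lam * norm1 x + inner (dg x) d - inner (G x) d)); last by ring.
by rewrite key addr0; apply: Hd.
Qed.

Lemma riemE x : M x -> norm2 (x - xbar) < rho -> riem_grad M f x = G x.
Proof.
move=> Mx nx; apply: xget_unique; first exact: is_riem_G.
by move=> w Hw; apply: (riem_unique Hw); apply: is_riem_G.
Qed.


Lemma SM y : argmin f y -> norm2 (y - xbar) < rho -> M y.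
Proof.
move=> Sy ny i xi; hyps.
case: (eqVneq (y 0 i) 0) => // yi; exfalso.
set s := sg (y 0 i).
have s1 : `|s| = 1 by apply: norm_sg.
have hd := dg_coord y xbar i.
have cqi := cq i; rewrite xi eqxx in cqi.
have T := abs_tri (dg y 0 i) (dg xbar 0 i).
have hLr : L * norm2 (y - xbar) <= L * rho by apply: ler_wpM2l; [exact: ltW | exact: ltW].
have Lr := Lrho_c.
set beta := lam - `|dg y 0 i|.
have b0 : 0 < beta by rewrite /beta; lra.
have b2 : 0 < beta / 2 by rewrite divr_gt0.
have [d0 d00 Hd] := Hg y b2.
set m := Num.min (d0 / 2) `|y 0 i|.
have m0 : 0 < m by rewrite lt_min divr_gt0 // normr_gt0 yi.
have m1 : m <= d0 / 2 by rewrite ge_min lexx.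
have m2 : m <= `|y 0 i| by rewrite ge_min lexx orbT.
set d := (- (s * m)) *: ev i.
have nd : norm2 d = m by rewrite norm2Z norm2_ev mulr1 normrN normrM s1 mul1r gtr0_norm.
have H := Hd d ltac:(rewrite nd; lra).
rewrite nd innerZr inner_ev in H.
have H' := ler_norm (g (y + d) - g y - - (s * m) * dg y 0 i).
have S1 := Sy (y + d); rewrite /= norm1_ev in S1.
have E : `|y 0 i + - (s * m)| = `|y 0 i| - m.
  rewrite {1}(numEsg (y 0 i)) -/s (_ : s * `|y 0 i| + - (s * m) = s * (`|y 0 i| - m)); last by ring.
  by rewrite normrM s1 mul1r ger0_norm // subr_ge0.
rewrite E in S1.
have I3 : - (s * m) * dg y 0 i <= m * `|dg y 0 i|.
  have := sg_ge (dg y 0 i) s1 => Q.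
  have : m * (- `|dg y 0 i|) <= m * (s * dg y 0 i) by apply: ler_wpM2l => //; exact: ltW.
  lra.
have P : 0 < beta * m by rewrite mulr_gt0.
rewrite /beta in P b2 H.
nra.
Qed.


Lemma xI_M x : M x -> xI x = 0.
Proof. by move=> Mx; apply/rowP => k; rewrite !mxE; case: ifP => // /eqP /Mx. Qed.

Lemma main_equiv : argmin f xbar ->
  ((exists eps mu : R, [/\ 0 < eps, 0 < mu &
      forall x, norm2 (x - xbar) < eps ->
        mu * dist x (argmin f) <= norm2 (x - prox t (fun x => lam * norm1 x) (x - t *: dg x))])
   <->
   (exists eps mu : R, [/\ 0 < eps, 0 < mu &
      forall x, M x -> norm2 (x - xbar) < eps ->
        mu * dist x (argmin f `&` M) <= norm2 (riem_grad M f x)])).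
Proof.
move=> Sx; hyps; have r0 := rho0.
have Mxbar : M xbar by [].
split.
  case=> [e1 [m1 [e10 m10 H1]]].
  exists (Num.min e1 (rho / 2)), (m1 / t); split.
  - by rewrite lt_min e10 divr_gt0.
  - by rewrite divr_gt0.
  move=> x Mx; rewrite lt_min => /andP[nx1 nx2].
  have nxr : norm2 (x - xbar) < rho by lra.
  have Hx := H1 x nx1.
  rewrite (residual nxr) (xI_M Mx) add0r norm2Z gtr0_norm // in Hx.
  rewrite (riemE Mx nxr).
  have DD : dist x (argmin f `&` M) <= dist x (argmin f).
    apply: (dist_ge (a0 := xbar)) => // a Sa.
    have [lt|ge] := ltP (norm2 (x - a)) (norm2 (x - xbar)).
      apply: dist_le; split => //; apply: SM => //.
      have := norm2_tri a x xbar; rewrite (norm2B a x); lra.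
    by apply: le_trans ge; apply: dist_le.
  have : m1 * dist x (argmin f `&` M) <= t * norm2 (G x).
    by apply: le_trans Hx; apply: ler_wpM2l => //; exact: ltW.
  by move=> HH; rewrite mulrAC ler_pdivrMr // (mulrC (norm2 _)).
case=> [e2 [m2 [e20 m20 H2]]].
set K := 1 + L / m2 + 1 / (t * m2).
have K0 : 0 < K.
  have : 0 < L / m2 by rewrite divr_gt0.
  have : 0 < 1 / (t * m2) by rewrite divr_gt0 ?mulr_gt0.
  rewrite /K; lra.
exists (Num.min e2 rho), K^-1; split.
- by rewrite lt_min e20.
- by rewrite invr_gt0.
move=> x; rewrite lt_min => /andP[nx2 nxr].
set y := x - xI x.
have My : M y by move=> i xi; rewrite !mxE xi eqxx subrr.
have nyx : norm2 (y - xbar) <= norm2 (x - xbar).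
  apply: norm2_le => k; rewrite !mxE.
  by case: (eqVneq (xbar 0 k) 0) => xk; rewrite ?xk ?subrr ?normr0 ?normr_ge0 // subr0.
have Hy := H2 y My ltac:(lra).
rewrite (riemE My ltac:(lra)) in Hy.
have Gyx : norm2 (G y) <= norm2 (G x) + L * norm2 (xI x).
  have := norm2_tri (G y) (G x) 0; rewrite !subr0 => T.
  have : norm2 (G y - G x) <= L * norm2 (xI x).
    apply: le_trans (_ : norm2 (dg y - dg x) <= _).
      apply: norm2_le => k; rewrite !mxE.
      case: (eqVneq (xbar 0 k) 0) => xk; rewrite ?xk ?eqxx ?(negbTE xk) ?subrr ?normr0 ?normr_ge0 //.
      by rewrite opprD addrACA subrr addr0.
    by apply: le_trans (HL y x) _; rewrite /y (addrC x) addrK norm2N.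
  lra.
have Dxy : dist x (argmin f) <= norm2 (xI x) + dist y (argmin f `&` M).
  have : dist x (argmin f) - norm2 (xI x) <= dist y (argmin f `&` M).
    apply: (dist_ge (a0 := xbar)) => // a [Sa Ma].
    have := dist_le x Sa; have := norm2_tri x y a.
    by rewrite /y subKr; lra.
  lra.
have res := residual nxr.
have X1 := xI_le x; have X2 := G_le x.
rewrite res; set r := norm2 (xI x + t *: G x); rewrite -/r in X1 X2.
rewrite -(ler_pM2l K0) mulrA mulfV ?gt_eqF // mul1r.
have A : m2 * dist x (argmin f) <= m2 * norm2 (xI x) + norm2 (G x) + L * norm2 (xI x).
  have : m2 * dist x (argmin f) <= m2 * (norm2 (xI x) + dist y (argmin f `&` M)).
    by apply: ler_wpM2l => //; exact: ltW.
  lra.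
have B : t * (m2 * dist x (argmin f)) <= t * (m2 * norm2 (xI x) + norm2 (G x) + L * norm2 (xI x)).
  by apply: ler_wpM2l => //; exact: ltW.
have C1 : t * m2 * norm2 (xI x) <= t * m2 * r by apply: ler_wpM2l => //; rewrite ltW // mulr_gt0.
have C2 : t * L * norm2 (xI x) <= t * L * r by apply: ler_wpM2l => //; rewrite ltW // mulr_gt0.
have KE : t * m2 * (K * r) = (t * m2 + t * L + 1) * r.
  rewrite /K; field; rewrite !gt_eqF //.
rewrite -(ler_pM2l (mulr_gt0 t0 m20)) KE.
lra.
Qed.

End Main.

End Aux.
Import Aux.

Theorem theorem5 (R : realType) (n : nat) (g : 'rV[R]_n -> R)
  (dg : 'rV[R]_n -> 'rV[R]_n) (L lam t : R) (xbar : 'rV[R]_n) :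
  is_gradient g dg -> 0 < L -> lipschitz_grad dg L -> 0 < lam -> 0 < t ->
  let h := fun x => lam * norm1 x in
  let f := fun x => g x + h x in
  let S := argmin f in
  let M := manifoldM xbar in
  S xbar ->
  ri (subdiff_f dg lam xbar) 0 ->
  ((exists eps mu : R, [/\ 0 < eps, 0 < mu &
      forall x, norm2 (x - xbar) < eps ->
        mu * dist x S <= norm2 (x - prox t h (x - t *: dg x))])
   <->
   (exists eps mu : R, [/\ 0 < eps, 0 < mu &
      forall x, M x -> norm2 (x - xbar) < eps ->
        mu * dist x (S `&` M) <= norm2 (riem_grad M f x)])).
Proof.
move=> Hg L0 HL l0 t0 h f S M Sx Hri.
pose q := fun k : 'I_n => if xbar 0 k == 0 then lam - `|dg xbar 0 k| else `|xbar 0 k|.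
have qp : forall k, 0 < q k.
  move=> k; rewrite /q; case: (eqVneq (xbar 0 k) 0) => xk.
    by rewrite subr_gt0; exact: (SC_b l0 Hri).
  by rewrite normr_gt0.
have [c c0 cq] := pos_lb qp.
exact: (main_equiv Hg L0 HL l0 t0 Hri c0 cq Sx).
Qed.
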